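(* Assume the Setting and Constants below and that $(L_g,L_c)$ satisfies $(S_n)$. Then the equation $$F\circ\begin{pmatrix}\mathrm{Id}+k_c\\ k_u\\ k_s\end{pmatrix}=\begin{pmatrix}\mathrm{Id}+k_c\\ k_u\\ k_s\end{pmatrix}\circ(A_c+r),$$ i.e. $F(x+k_c(x)+k_u(x)+k_s(x))=y+k_c(y)+k_u(y)+k_s(y)$ with $y=A_cx+r(x)$ for all $x\in X_c$, has a unique solution $(r,k_u,k_s)$ among all $k_u\in C^0_b(X_c,X_u)$, $k_s\in C^0_b(X_c,X_s)$ and $r\in C^0_b(X_c,X_c)$ such that $A_c+r$ is a homeomorphism of $X_c$.
   Context: Notation. $C^k_b(Y,Z)$ is the Banach space of $C^k$ maps $f:Y\to Z$ between Banach spaces with $\|f\|_k:=\max_{0\le j\le k}\sup_y\|D^jf(y)\|<\infty$; $C^0_b$ consists of bounded continuous maps. Setting. Let $n\ge2$ be an integer and $X$ a Banach space with $X=X_c\oplus X_u\oplus X_s$ for closed subspaces, whose norm satisfies $\|x\|=\max\{\|x_c\|,\|x_u\|,\|x_s\|\}$. Let $A$ be a bounded linear operator on $X$ leaving $X_c,X_u,X_s$ invariant, with restrictions $A_c,A_u,A_s$; $A_c,A_u$ invertible, and $\|A_c^{-1}\|^{\tilde n}\|A_s\|<1$, $\|A_u^{-1}\|\|A_c\|^{\tilde n}<1$ for $1\le\tilde n\le n$. Let $L_g,L_c\ge0$, $F=A+g$ with $g\in C^n_b(X,X)$, $g(0)=0$, $Dg(0)=0$, $\|Dg\|_0\le L_g$,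 and $k_c\in C^n_b(X_c,X_c)$ with $k_c(0)=0$, $Dk_c(0)=0$, $\|Dk_c\|_0\le L_c$. Constants. $L_r:=\frac{L_g+L_c(2\|A_c\|+L_g)}{1-L_c}$, $L_t:=\frac{\|A_c^{-1}\|^2L_r}{1-\|A_c^{-1}\|L_r}$, $L_u:=\frac{\|A_u^{-1}\|(1+L_c)L_g}{1-L_r\|A_u^{-1}\|-\|A_c\|\|A_u^{-1}\|}$, $L_s:=\frac{\|A_c^{-1}\|(1+L_c)L_g}{1-L_r\|A_c^{-1}\|-\|A_s\|\|A_c^{-1}\|}$, $L_{-1}:=\|A_c^{-1}\|+L_t$; $\theta_{\tilde n,1}:=L_g+L_c$, $\theta_{\tilde n,2}:=\|A_u^{-1}\|((\|A_c\|+L_r)^{\tilde n}+L_g+L_u)$, $\theta_{\tilde n,3}:=L_{-1}^{\tilde n}(\|A_s\|(1+L_{-1}L_s)+L_g(1+L_{-1}(1+L_c)))$. $(S_N)$ means: $L_c<1$, $L_r\|A_c^{-1}\|<1$, $L_r\|A_u^{-1}\|+\|A_c\|\|A_u^{-1}\|<1$, $L_r\|A_c^{-1}\|+\|A_s\|\|A_c^{-1}\|<1$, and $\theta_{\tilde n,i}<1$ for $i=1,2,3$, $0\le\tilde n\le N$. *)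

(* Defs.v *)
From HB Require Import structures.
From mathcomp Require Import all_boot all_order all_algebra.
From mathcomp Require Import all_classical all_reals all_analysis.
Set Implicit Arguments. Unset Strict Implicit. Unset Printing Implicit Defensive.
Import Order.TTheory GRing.Theory Num.Theory.
Import numFieldNormedType.Exports.
Local Open Scope classical_set_scope.
Local Open Scope ring_scope.

Section Defs.
Variable R : realType.

Definition opnorm (U V : normedModType R) (f : U -> V) : R :=
  inf [set M : R | 0 <= M /\ forall x, `|f x| <= M * `|x|].

Definition prodnorm (U : normedModType R) (hs : seq U) : R :=
  \prod_(h <- hs) `|h|.

Definition multilinear (U V : normedModType R) (j : nat) (T : seq U -> V) :=
  forall hs : seq U, size hs = j -> forall i, (i < j)%N ->
  forall (a : R) (u v : U),
    T (set_nth 0 hs i (a *: u + v)) =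
    a *: T (set_nth 0 hs i u) + T (set_nth 0 hs i v).

(* [Ckb_family k f D]: D j y [h_1;...;h_j] = D^j f(y)[h_1,...,h_j] for j <= k,
   and these are the Frechet derivatives of f, continuous in the multilinear
   operator norm, with  ||f||_k = max_{j<=k} sup_y ||D^j f(y)|| < oo.
   Thus  f \in C^k_b(Y,Z)  iff  exists D, Ckb_family k f D  (and D is then
   unique on lists of the right length). *)
Definition Ckb_family (Y Z : normedModType R) (k : nat) (f : Y -> Z)
    (D : nat -> Y -> seq Y -> Z) : Prop :=
  [/\ (forall y, D 0%N y [::] = f y),
      (forall j, (j <= k)%N -> forall y, multilinear j (D j y)),
      (forall j, (j < k)%N -> forall y (e : R), 0 < e ->
         exists2 d : R, 0 < d & forall h : Y, `|h| < d ->
           forall hs, size hs = j ->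
             `|D j (y + h) hs - D j y hs - D j.+1 y (h :: hs)|
               <= e * `|h| * prodnorm hs),
      (forall j, (j <= k)%N -> forall y (e : R), 0 < e ->
         exists2 d : R, 0 < d & forall y' : Y, `|y' - y| < d ->
           forall hs, size hs = j ->
             `|D j y' hs - D j y hs| <= e * prodnorm hs) &
      (exists M : R, forall j, (j <= k)%N -> forall y hs, size hs = j ->
         `|D j y hs| <= M * prodnorm hs)].

Definition bounded_continuous (Y Z : normedModType R) (f : Y -> Z) : Prop :=
  continuous f /\ exists M : R, forall y, `|f y| <= M.

Definition homeomorphism (Y : normedModType R) (h : Y -> Y) : Prop :=
  continuous h /\ exists2 h' : Y -> Y, cancel h h' /\ cancel h' h & continuous h'.

(* Constants; a = ||A_c||, ai = ||A_c^{-1}||, ui = ||A_u^{-1}||, s = ||A_s||. *)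
Definition cL_r (a Lg Lc : R) : R := (Lg + Lc * (2 * a + Lg)) / (1 - Lc).
Definition cL_t (a ai Lg Lc : R) : R :=
  ai ^+ 2 * cL_r a Lg Lc / (1 - ai * cL_r a Lg Lc).
Definition cL_u (a ui Lg Lc : R) : R :=
  ui * (1 + Lc) * Lg / (1 - cL_r a Lg Lc * ui - a * ui).
Definition cL_s (a ai s Lg Lc : R) : R :=
  ai * (1 + Lc) * Lg / (1 - cL_r a Lg Lc * ai - s * ai).
Definition cL_m1 (a ai Lg Lc : R) : R := ai + cL_t a ai Lg Lc.
Definition theta1 (m : nat) (Lg Lc : R) : R := Lg + Lc.
Definition theta2 (m : nat) (a ui Lg Lc : R) : R :=
  ui * ((a + cL_r a Lg Lc) ^+ m + Lg + cL_u a ui Lg Lc).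
Definition theta3 (m : nat) (a ai s Lg Lc : R) : R :=
  cL_m1 a ai Lg Lc ^+ m *
   (s * (1 + cL_m1 a ai Lg Lc * cL_s a ai s Lg Lc)
    + Lg * (1 + cL_m1 a ai Lg Lc * (1 + Lc))).

Definition cond_S (N : nat) (a ai ui s Lg Lc : R) : Prop :=
  [/\ Lc < 1,
      cL_r a Lg Lc * ai < 1,
      cL_r a Lg Lc * ui + a * ui < 1,
      cL_r a Lg Lc * ai + s * ai < 1 &
      forall m, (m <= N)%N ->
        [/\ theta1 m Lg Lc < 1, theta2 m a ui Lg Lc < 1 &
            theta3 m a ai s Lg Lc < 1]].

End Defs.

(* Main.v *)
Require Import Defs.
From HB Require Import structures.
From mathcomp Require Import all_boot all_order all_algebra.
From mathcomp Require Import all_classical all_reals all_analysis.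
From mathcomp Require Import ring lra.
Import Order.TTheory GRing.Theory Num.Theory.
Import numFieldNormedType.Exports.
Local Open Scope classical_set_scope.
Local Open Scope ring_scope.
Section S.
Context {R : realType}.
Lemma geo_small (x y c q : R) : 0 <= q < 1 -> (forall k, x <= y + c * q ^+ k) -> x <= y.
Proof.
move=> /andP[q0 q1] H; rewrite leNgt; apply/negP => yx.
have c1 : 0 < `|c| + 1 by have := normr_ge0 c; lra.
have e0 : 0 < (x - y) / (`|c| + 1) by rewrite divr_gt0 // subr_gt0.
have := @cvg_expr R q; rewrite ger0_norm // => /(_ q1).
move/cvgrPdist_lt => /(_ _ e0) [N _ HN].
have := HN N (leqnn N). rewrite /= sub0r normrN ger0_norm ?exprn_ge0 //.
rewrite ltr_pdivlMr // => h.
have := H N. 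
have : c * q ^+ N <= `|c| * q ^+ N.
  apply: ler_wpM2r; [exact: exprn_ge0 | exact: ler_norm].
have : `|c| * q ^+ N <= q ^+ N * (`|c| + 1).
  by rewrite mulrC ler_wpM2l ?exprn_ge0 // lerDl.
lra.
Qed.
Lemma geo_dist (V : normedModType R) (u : nat -> V) (B q : R) :
  0 <= B -> 0 <= q < 1 -> (forall k, `|u k.+1 - u k| <= B * q ^+ k) ->
  forall n m, `|u n - u (n + m)%N| <= B / (1 - q) * q ^+ n.
Proof.
move=> B0 /andP[q0 q1] H n m.
have q1' : 0 < 1 - q by rewrite subr_gt0.
have BC : B = B / (1 - q) * (1 - q) by rewrite divfK // gt_eqF.
set C := B / (1 - q) in BC *.
have C0 : 0 <= C by rewrite divr_ge0 // ltW.
suff : `|u n - u (n + m)%N| <= C * q ^+ n * (1 - q ^+ m).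
  move/le_trans; apply; apply: ler_piMr; first exact: mulr_ge0 C0 (exprn_ge0 _ q0).
  by rewrite lerBlDr lerDl exprn_ge0.
elim: m => [|m IH].
  by rewrite (addn0 n) subrr normr0 expr0 subrr mulr0.
rewrite addnS (le_trans (ler_distD (u (n + m)%N) _ _)) //.
apply: le_trans (lerD IH _) _; first by rewrite distrC; exact: H.
rewrite le_eqVlt; apply/orP; left; apply/eqP; rewrite BC exprD exprS; ring.
Qed.

Lemma geo_cvg (V : completeNormedModType R) (u : nat -> V) (B q : R) :
  0 <= B -> 0 <= q < 1 -> (forall k, `|u k.+1 - u k| <= B * q ^+ k) ->
  exists l, forall k, `|l - u k| <= B / (1 - q) * q ^+ k.
Proof.
move=> B0 /andP[q0 q1] H.
have dist := @geo_dist V u B q B0 (introT andP (conj q0 q1)) H.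
have q1' : 0 < 1 - q by rewrite subr_gt0.
set C := B / (1 - q) in dist *.
have C_ge0 : 0 <= C by rewrite divr_ge0 // ltW.
have cu : cvgn u.
  apply/cauchy_cvgP; apply/cauchy_ballP => _/posnumP[e]; near_simpl.
  have lt_min n m : `|u n - u m| <= C * q ^+ minn n m.
    wlog : n m / (n <= m)%N => W.
      by case/orP: (leq_total n m) => /W //; rewrite distrC minnC.
    by rewrite (minn_idPl _)// (le_trans _ (dist _ (m - n)%N))// subnKC.
  case: ltrgt0P C_ge0 => // [Cpos|C0] _; last first.
    near=> n m => /=; rewrite -ball_normE.
    by apply: (le_lt_trans (lt_min _ _)); rewrite C0 mul0r.
  near=> n; rewrite -ball_normE /= (le_lt_trans (lt_min n.1 n.2)) //.
  rewrite // -ltr_pdivlMl //.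
  suff : ball 0 (C^-1 * e%:num) (q ^+ minn n.1 n.2).
    by rewrite /ball /= sub0r normrN ger0_norm // exprn_ge0.
  near: n; rewrite nbhs_simpl.
  pose g := fun w : nat * nat => q ^+ minn w.1 w.2.
  have := @fcvg_ball _ _ (g @ filter_prod \oo \oo) _ 0 _ (C^-1 * e%:num).
  move: (@cvg_geometric _ 1 q); rewrite ger0_norm // => /(_ q1) geo.
  near_simpl; apply; last by rewrite mulr_gt0 // invr_gt0.
  apply/cvg_ballP => _/posnumP[delta]; near_simpl.
  have [N _ Q] : \forall N \near \oo, ball 0 delta%:num (geometric 1 q N).
    exact: (@fcvg_ball R R _ _ 0 geo).
  exists ([set n | N <= n], [set n | N <= n])%N; first by split; exists N.
  move=> [n m] [Nn Nm]; rewrite /ball /= sub0r normrN ger0_norm /g ?exprn_ge0 //.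
  apply: le_lt_trans; last by apply: (Q N) => /=.
  rewrite sub0r normrN ger0_norm /geometric ?mul1r ?exprn_ge0 //=.
  by rewrite mul1r ler_wiXn2l // ?ltW // leq_min Nn.
  by rewrite mul1r exprn_ge0.
exists (limn u); move=> k.
have cn : (fun m => `|u m - u k|) @ \oo --> `|limn u - u k|.
  by apply: cvg_norm; apply: cvgB => //; exact: cvg_cst.
rewrite -(cvg_lim _ cn) //; apply: limr_le; first by apply/cvg_ex; eexists; exact: cn.
near=> m; rewrite distrC.
have -> : m = (k + (m - k)%N)%N by rewrite subnKC //; near: m; exists k.
exact: dist.
Unshelve. all: end_near. Qed.
Definition geoc (V : normedModType R) := forall (u : nat -> V) (B q : R),
  0 <= B -> 0 <= q < 1 -> (forall k, `|u k.+1 - u k| <= B * q ^+ k) ->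
  exists l, forall k, `|l - u k| <= B / (1 - q) * q ^+ k.

Lemma geoc_complete (V : completeNormedModType R) : geoc V.
Proof. move=> u B q; exact: geo_cvg. Qed.

Lemma norm_fst {U V : normedModType R} (x : U * V) : `|x.1| <= `|x|.
Proof. by rewrite prod_normE le_max lexx. Qed.
Lemma norm_snd {U V : normedModType R} (x : U * V) : `|x.2| <= `|x|.
Proof. by rewrite prod_normE le_max lexx orbT. Qed.
Lemma norm_pair {U V : normedModType R} (x : U * V) c :
  `|x.1| <= c -> `|x.2| <= c -> `|x| <= c.
Proof. by move=> h1 h2; rewrite prod_normE ge_max h1 h2. Qed.

Lemma geoc_prod {U W : normedModType R} : geoc U -> geoc W -> geoc (U * W)%type.
Proof.
move=> gU gW u B q B0 q01 H.
have [l1 H1] := gU (fun k => (u k).1) B q B0 q01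
  (fun k => le_trans (norm_fst (u k.+1 - u k)) (H k)).
have [l2 H2] := gW (fun k => (u k).2) B q B0 q01
  (fun k => le_trans (norm_snd (u k.+1 - u k)) (H k)).
by exists (l1, l2) => k; apply: norm_pair; [exact: H1 | exact: H2].
Qed.

Lemma eq_leW (x y : R) : x = y -> x <= y. Proof. by move=> ->. Qed.

Lemma abstract_fix (A : Type) (V : normedModType R) (gV : geoc V)
  (K : (A -> V) -> Prop) (T : (A -> V) -> A -> V) (q : R) (f0 : A -> V) (B0 : R) :
  0 <= q < 1 -> 0 <= B0 -> K f0 -> (forall f, K f -> K (T f)) ->
  (forall f f' B, K f -> K f' -> 0 <= B -> (forall a, `|f a - f' a| <= B) ->
     forall a, `|T f a - T f' a| <= q * B) ->
  (forall a, `|T f0 a - f0 a| <= B0) ->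
  (forall (fs : nat -> A -> V) f C, (forall k, K (fs k)) ->
     (forall k a, `|f a - fs k a| <= C * q ^+ k) -> K f) ->
  exists f, K f /\ T f = f.
Proof.
move=> /andP[q0 q1] B00 Kf0 KT Tc Hb0 Kcl.
pose fs k := iter k T f0.
have Kfs k : K (fs k) by elim: k => [|k IH] //=; exact: KT.
have step k a : `|fs k.+1 a - fs k a| <= B0 * q ^+ k.
  elim: k a => [|k IH] a; first by rewrite expr0 mulr1; exact: Hb0.
  have := Tc (fs k.+1) (fs k) (B0 * q ^+ k) (Kfs _) (Kfs _).
  rewrite mulr_ge0 ?exprn_ge0 // => /(_ isT IH a) /le_trans; apply.
  by apply: eq_leW; rewrite exprS; ring.
have /boolp.choice [f Hf] : forall a, exists l : V,
    forall k, `|l - fs k a| <= B0 / (1 - q) * q ^+ k.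
  move=> a; apply: (gV (fun k => fs k a) B0 q) => //.
  by rewrite q0 q1.
have Kf : K f by apply: (Kcl fs f (B0 / (1 - q))).
have C0 : 0 <= B0 / (1 - q) by rewrite divr_ge0 // subr_ge0 ltW.
exists f; split => //; apply: boolp.funext => a.
apply/eqP; rewrite -subr_eq0 -normr_le0.
apply: (@geo_small _ 0 (2 * (B0 / (1 - q)) * q) q); first by rewrite q0 q1.
move=> k.
have h1 := Tc f (fs k) (B0 / (1 - q) * q ^+ k) Kf (Kfs k).
have := h1 (mulr_ge0 C0 (exprn_ge0 _ q0)) (Hf ^~ k) a.
have h2 := Hf a k.+1.
rewrite -/(fs k.+1) /= => h3.
apply: le_trans (ler_distD (fs k.+1 a) _ _) _.
rewrite add0r (distrC _ (f a)).
apply: le_trans (lerD h3 h2) _.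
by apply: eq_leW; rewrite exprS; ring.
Qed.
Lemma le_eps (a b c : R) : 0 <= c ->
  (forall eps, 0 < eps -> a <= b + c * eps) -> a <= b.
Proof.
move=> c0 H; apply/ler_addgt0Pr => e e0.
have c1 : 0 < c + 1 by lra.
have := H (e / (c + 1)) (divr_gt0 e0 c1); move/le_trans; apply.
rewrite lerD2l mulrA ler_pdivrMr //.
nra.
Qed.

Lemma lip_local (U W : normedModType R) (f : U -> W) (L : R) :
  0 <= L ->
  (forall y e, 0 < e -> exists2 d, 0 < d & forall h, `|h| < d ->
     `|f (y + h) - f y| <= (L + e) * `|h|) ->
  forall x y, `|f x - f y| <= L * `|x - y|.
Proof.
move=> L0 Hloc x y.
set v := x - y.
pose p (t : R) := y + t *: v.
have px : p 1 = x by rewrite /p scale1r /v addrC subrK.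
have v0 : 0 <= `|v| := normr_ge0 v.
rewrite -px; apply: (@le_eps _ _ `|v|) => // e e0.
pose S := [set t : R | 0 <= t <= 1 /\ `|f (p t) - f y| <= (L + e) * t * `|v|].
have S0 : S 0.
  split; first by rewrite lexx ler01.
  by rewrite /p scale0r addr0 subrr normr0 mulr0 mul0r.
have hS : has_sup S.
  by split; [exists 0 | exists 1 => t [/andP[_ ?] _]].
set s := sup S.
have s0 : 0 <= s by exact: sup_upper_bound hS _ S0.
have s1 : s <= 1.
  by apply: ge_sup; [exists 0 | move=> t [/andP[_ ?] _]].
have pst (t : R) : p t = p s + (t - s) *: v.
  by rewrite /p scalerBl -addrA; congr (_ + _); rewrite addrC subrK.
have vd (d eta : R) : 0 < d -> 0 <= eta -> eta <= d / (`|v| + 1) -> eta * `|v| < d.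
  move=> d0 eta0 etad.
  have v1 : 0 < `|v| + 1 by lra.
  apply: le_lt_trans (ler_wpM2r v0 etad) _.
  rewrite mulrAC ltr_pdivrMr //; nra.
have claim1 : `|f (p s) - f y| <= (L + e) * s * `|v|.
  have [d d0 Hd] := Hloc (p s) 1 ltr01.
  apply: (@le_eps _ _ ((L + 1) * `|v|)) => [|eps eps0]; first by rewrite mulr_ge0 // addr_ge0.
  have v1 : 0 < `|v| + 1 by lra.
  pose eta := Num.min eps (d / (`|v| + 1)).
  have eta0 : 0 < eta by rewrite lt_min eps0 divr_gt0.
  have [t St lt] := sup_adherent eta0 hS.
  have ts : t <= s by exact: sup_upper_bound hS _ St.
  have etae : eta <= eps by rewrite ge_min lexx.
  have etad : eta <= d / (`|v| + 1) by rewrite ge_min lexx orbT.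
  have hn : `|(t - s) *: v| = (s - t) * `|v|.
    by rewrite normrZ distrC ger0_norm // subr_ge0.
  rewrite -/s in lt.
  have stl : s - t <= eta by lra.
  have := Hd ((t - s) *: v); rewrite hn -pst.
  have st0 : 0 <= s - t by lra.
  have std : s - t <= d / (`|v| + 1) by lra.
  move=> /(_ (vd _ _ d0 st0 std)) H1.
  case: St => _ St.
  apply: le_trans (ler_distD (f (p t)) _ _) _.
  rewrite distrC.
  have A1 : (L + 1) * ((s - t) * `|v|) <= (L + 1) * (eps * `|v|).
    by apply: ler_wpM2l; [lra | apply: ler_wpM2r => //; lra].
  have A2 : (L + e) * t * `|v| <= (L + e) * s * `|v|.
    by apply: ler_wpM2r => //; apply: ler_wpM2l => //; lra.
  lra.
have s_eq1 : s = 1.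
  apply/eqP; rewrite eq_le s1 /=; rewrite leNgt; apply/negP => slt.
  have [d d0 Hd] := Hloc (p s) e e0.
  have v1 : 0 < `|v| + 1 by lra.
  pose tau := Num.min (1 - s) (d / (`|v| + 1)).
  have tau0 : 0 < tau by rewrite lt_min subr_gt0 slt divr_gt0.
  have tau1 : tau <= 1 - s by rewrite ge_min lexx.
  have taud : tau <= d / (`|v| + 1) by rewrite ge_min lexx orbT.
  have hn : `|tau *: v| = tau * `|v| by rewrite normrZ ger0_norm // ltW.
  have := Hd (tau *: v); rewrite hn => /(_ (vd _ _ d0 (ltW tau0) taud)) H1.
  have Sst : S (s + tau).
    split; first by apply/andP; split; lra.
    have -> : p (s + tau) = p s + tau *: v by rewrite (pst (s + tau)) [s + tau]addrC addrK.
    apply: le_trans (ler_distD (f (p s)) _ _) _.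
    rewrite [X in X + _]distrC.
    have -> : (L + e) * (s + tau) * `|v| = (L + e) * (tau * `|v|) + (L + e) * s * `|v|
      by ring.
    rewrite (distrC (f (p s)) (f (p s + tau *: v))); lra.
  have := sup_upper_bound hS Sst; rewrite -/s; lra.
move: claim1; rewrite s_eq1 => h; apply: le_trans h _.
apply: eq_leW; ring.
Qed.
Section opn.
Variables (U V : normedModType R) (f : {linear U -> V}).
Hypothesis fc : continuous (f : U -> V).
Let E := [set M : R | 0 <= M /\ forall x, `|f x| <= M * `|x|].
Let E0 : E !=set0.
Proof.
have := @continuous_linear_bounded R U V 0 f (fc 0).
move=> /linear_boundedP [y [yreal fr]].
exists (Num.max y 0 + 1); split.
  by rewrite addr_ge0 // le_max lexx orbT.
apply: fr; rewrite ltr_pwDr ?ltr01 // le_max lexx //.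
Qed.
Lemma opnorm_ge0 : 0 <= opnorm (f : U -> V).
Proof. by apply: lb_le_inf => [|M []]; [exact: E0 | ]. Qed.
Lemma opnorm_le x : `|f x| <= opnorm (f : U -> V) * `|x|.
Proof.
have [->|x0] := eqVneq x 0; first by rewrite linear0 !normr0 mulr0.
have xp : 0 < `|x| by rewrite normr_gt0.
rewrite -ler_pdivrMr //; apply: lb_le_inf; first exact: E0.
by move=> M [_ HM]; rewrite ler_pdivrMr.
Qed.
End opn.
Lemma lip_cont {U V : normedModType R} {f : U -> V} {L : R} : 0 <= L ->
  (forall x y, `|f x - f y| <= L * `|x - y|) -> continuous f.
Proof.
move=> L0 Hf x; apply/cvgrPdist_lt => e e0.
have L1 : 0 < L + 1 by lra.
apply/nbhs_normP; exists (e / (L + 1)); first by rewrite /= divr_gt0.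
move=> z /= xz; apply: le_lt_trans (Hf x z) _.
have : `|x - z| * (L + 1) < e by rewrite -ltr_pdivlMr.
have := normr_ge0 (x - z); nra.
Qed.
Lemma banach (V : completeNormedModType R) (h : V -> V) (k : R) :
  0 <= k < 1 -> (forall x y, `|h x - h y| <= k * `|x - y|) -> exists z, h z = z.
Proof.
move=> k01 hl.
have [||||f [_ Hf]] := @abstract_fix unit V (geoc_complete V) (fun _ => True) (fun f _ => h (f tt)) k
  (fun _ => 0) `|h 0| k01 (normr_ge0 _) I.
- by [].
- by move=> f f' B _ _ _ Hb a; apply: le_trans (hl _ _) _; apply: ler_wpM2l;
    [case/andP: k01 | exact: Hb].
- by move=> a; rewrite subr0.
- by [].
- by exists (f tt); have := congr1 (fun F => F tt) Hf.
Qed.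
End S.

Lemma zid1 {V : zmodType} (z z' k k' : V) : z - z' = (z + k - (z' + k')) - (k - k').
Proof. by rewrite opprD addrACA addrK. Qed.
Lemma zid3 {V : zmodType} (x y u v : V) : x + u - (y + v) = (x - y) + (u - v).
Proof. by rewrite opprD addrACA. Qed.
Lemma zid2 {V : zmodType} (a1 a2 g1 g2 k1 k2 : V) :
  a1 + g1 - k1 - (a2 + g2 - k2) = (a1 - a2) + (g1 - g2) - (k1 - k2).
Proof. by rewrite [LHS]zid3 [X in X + _ = _]zid3 opprD. Qed.
Lemma zid4 {V : zmodType} (a b c : V) : a - b - (a - c) = c - b.
Proof. by rewrite opprB addrC addrA subrK. Qed.
Lemma zid5 {V : zmodType} (a b c : V) : a + b - c - a = b - c.
Proof. by rewrite addrAC [a + b]addrC addrK. Qed.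
Lemma zid6 {V : zmodType} (a b c d : V) : a - b - (c - d) = (a - c) - (b - d).
Proof. by rewrite zid3 -opprD. Qed.

Section Main.
Variables (R : realType) (n : nat)
  (Xc Xu Xs : completeNormedModType R)
  (Ac Aci : {linear Xc -> Xc}) (Au Aui : {linear Xu -> Xu})
  (As : {linear Xs -> Xs})
  (g : Xc * Xu * Xs -> Xc * Xu * Xs)
  (Dg : nat -> Xc * Xu * Xs -> seq (Xc * Xu * Xs) -> Xc * Xu * Xs)
  (kc : Xc -> Xc) (Dkc : nat -> Xc -> seq Xc -> Xc)
  (Lg Lc : R).
Hypothesis n2 : (2 <= n)%N.
Hypotheses (cAc : continuous (Ac : Xc -> Xc)) (cAu : continuous (Au : Xu -> Xu))
  (cAs : continuous (As : Xs -> Xs))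
  (cAci : continuous (Aci : Xc -> Xc)) (cAui : continuous (Aui : Xu -> Xu)).
Hypotheses (AcK : cancel Ac Aci) (AciK : cancel Aci Ac) (AuK : cancel Au Aui)
  (AuiK : cancel Aui Au).
Hypotheses (Lg0 : 0 <= Lg) (Lc0 : 0 <= Lc).
Hypotheses (Cg : Ckb_family n g Dg)
  (Dgb : forall y h, `|Dg 1%N y [:: h]| <= Lg * `|h|).
Hypotheses (Ckc : Ckb_family n kc Dkc)
  (Dkcb : forall y h, `|Dkc 1%N y [:: h]| <= Lc * `|h|).
Hypothesis HS : cond_S n (opnorm (Ac : Xc -> Xc)) (opnorm (Aci : Xc -> Xc))
    (opnorm (Aui : Xu -> Xu)) (opnorm (As : Xs -> Xs)) Lg Lc.

Let a := opnorm (Ac : Xc -> Xc).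
Let ai := opnorm (Aci : Xc -> Xc).
Let ui := opnorm (Aui : Xu -> Xu).
Let s := opnorm (As : Xs -> Xs).
Let Lr := cL_r a Lg Lc.
Let Lu := cL_u a ui Lg Lc.
Let Ls := cL_s a ai s Lg Lc.
Let Lm1 := cL_m1 a ai Lg Lc.
Let th2 := ui * (1 + Lg + Lu).
Let th3 := s * (1 + Lm1 * Ls) + Lg * (1 + Lm1 * (1 + Lc)).
Let q := Num.max th2 th3.

Let a0 : 0 <= a. Proof. exact: opnorm_ge0. Qed.
Let ai0 : 0 <= ai. Proof. exact: opnorm_ge0. Qed.
Let ui0 : 0 <= ui. Proof. exact: opnorm_ge0. Qed.
Let s0 : 0 <= s. Proof. exact: opnorm_ge0. Qed.
Let Acb x : `|Ac x| <= a * `|x|. Proof. exact: opnorm_le. Qed.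
Let Acib x : `|Aci x| <= ai * `|x|. Proof. exact: opnorm_le. Qed.
Let Auib x : `|Aui x| <= ui * `|x|. Proof. exact: opnorm_le. Qed.
Let Asb x : `|As x| <= s * `|x|. Proof. exact: opnorm_le. Qed.

Let Lc1 : Lc < 1. Proof. by case: HS. Qed.
Let Lrai : Lr * ai < 1. Proof. by case: HS. Qed.
Let Hu : Lr * ui + a * ui < 1. Proof. by case: HS. Qed.
Let Hs : Lr * ai + s * ai < 1. Proof. by case: HS. Qed.
Let th1 : Lg + Lc < 1.
Proof. by case: HS => _ _ _ _ /(_ 0%N (leq0n _)) []. Qed.
Let th2_0 : th2 < 1.
Proof.
case: HS => _ _ _ _ /(_ 0%N (leq0n _)) [_ + _].
by rewrite /theta2 expr0.
Qed.
Let th3_0 : th3 < 1.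
Proof.
case: HS => _ _ _ _ /(_ 0%N (leq0n _)) [_ _].
by rewrite /theta3 expr0 mul1r.
Qed.
Let th2_1 : ui * (a + Lr + Lg + Lu) < 1.
Proof.
case: HS => _ _ _ _ /(_ 1%N (ltnW n2)) [_ + _].
by rewrite /theta2 expr1.
Qed.
Let th3_1 : Lm1 * th3 < 1.
Proof.
case: HS => _ _ _ _ /(_ 1%N (ltnW n2)) [_ _].
by rewrite /theta3 expr1.
Qed.

Let Lr0 : 0 <= Lr.
Proof.
rewrite /Lr /cL_r divr_ge0 //; last by rewrite subr_ge0 ltW.
by rewrite addr_ge0 // mulr_ge0 // addr_ge0 // mulr_ge0.
Qed.
Let E0 : 0 < 1 - ai * Lr. Proof. rewrite subr_gt0 mulrC //. Qed.
Let Du0 : 0 < 1 - Lr * ui - a * ui. Proof. have := Hu; lra. Qed.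
Let Ds0 : 0 < 1 - Lr * ai - s * ai. Proof. have := Hs; lra. Qed.
Let LuE : Lu = ui * (1 + Lc) * Lg / (1 - Lr * ui - a * ui).
Proof. by []. Qed.
Let LsE : Ls = ai * (1 + Lc) * Lg / (1 - Lr * ai - s * ai).
Proof. by []. Qed.
Let Lm1E : Lm1 = ai / (1 - ai * Lr).
Proof.
rewrite /Lm1 /cL_m1 /cL_t -/Lr; move: E0; move: (ai) (Lr) => x y h.
by field; rewrite gt_eqF.
Qed.
Let Lu0 : 0 <= Lu.
Proof.
rewrite LuE; apply: divr_ge0; last exact: ltW.
by apply: mulr_ge0 => //; apply: mulr_ge0 => //; apply: addr_ge0.
Qed.
Let Ls0 : 0 <= Ls.
Proof.
rewrite LsE; apply: divr_ge0; last exact: ltW.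
by apply: mulr_ge0 => //; apply: mulr_ge0 => //; apply: addr_ge0.
Qed.
Let Lm10 : 0 <= Lm1.
Proof. by rewrite Lm1E; apply: divr_ge0 => //; exact: ltW. Qed.
Let q0 : 0 <= q.
Proof. by rewrite le_max /th2 mulr_ge0 // addr_ge0 // addr_ge0. Qed.
Let q1 : q < 1.
Proof. by rewrite gt_max th2_0 th3_0. Qed.
Let q01 : 0 <= q < 1. Proof. by rewrite q0 q1. Qed.

Let I1 : ui * (Lu * (a + Lr) + Lg * (1 + Lc)) = Lu.
Proof.
rewrite LuE; move: Du0; move: (ui) (Lr) (a) Lg Lc => x y z u v h.
by field; rewrite gt_eqF.
Qed.
Let I2 : Lm1 * (s * Ls + Lg * (1 + Lc)) = Ls.
Proof.
rewrite Lm1E LsE; move: E0 Ds0; move: (ai) (Lr) (s) Lg Lc => x y z u v h h'.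
by field; rewrite !gt_eqF.
Qed.
Let LuL : Lu <= 1 + Lc.
Proof.
have h1 : ui * Lg <= 1 - Lr * ui - a * ui.
  have := th2_1; have := mulr_ge0 ui0 Lu0; lra.
rewrite -(ler_pM2r Du0) LuE divfK ?gt_eqF // -mulrA mulrC.
by rewrite -mulrA; apply: ler_wpM2l; [exact: addr_ge0 ler01 Lc0 | rewrite mulrC].
Qed.
Let LsL : Ls <= 1 + Lc.
Proof.
have h0 : Lm1 * (s + Lg) < 1.
  apply: le_lt_trans th3_1; apply: ler_wpM2l => //.
  rewrite /th3; have := mulr_ge0 s0 (mulr_ge0 Lm10 Ls0).
  have := mulr_ge0 Lg0 (mulr_ge0 Lm10 (addr_ge0 ler01 Lc0)); lra.
have h1 : ai * (s + Lg) < 1 - ai * Lr.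
  by move: h0; rewrite Lm1E mulrAC ltr_pdivrMr // mul1r.
have h2 : ai * Lg <= 1 - Lr * ai - s * ai by lra.
rewrite -(ler_pM2r Ds0) LsE divfK ?gt_eqF // -mulrA mulrC.
by rewrite -mulrA; apply: ler_wpM2l; [exact: addr_ge0 ler01 Lc0 | rewrite mulrC].
Qed.


Lemma Ckb_lip {Y Z : normedModType R} {f : Y -> Z} {D} {L : R} : 0 <= L ->
  Ckb_family n f D -> (forall y h, `|D 1%N y [:: h]| <= L * `|h|) ->
  forall x y, `|f x - f y| <= L * `|x - y|.
Proof.
move=> L0 [D0 _ Dd _ _] Db; apply: lip_local => // y e e0.
have [d d0 Hd] := Dd 0%N (leq_ltn_trans (leq0n 1) n2) y e e0.
exists d => // h hd; have := Hd h hd [::] erefl.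
rewrite !D0 /prodnorm big_nil mulr1 => H.
have -> : f (y + h) - f y = (f (y + h) - f y - D 1%N y [:: h]) + D 1%N y [:: h].
  by rewrite subrK.
apply: le_trans (ler_normD _ _) _.
have := Db y h; rewrite mulrDl; lra.
Qed.

Lemma Ckb_bnd {Y Z : normedModType R} {f : Y -> Z} {D} :
  Ckb_family n f D -> exists M, 0 <= M /\ forall y, `|f y| <= M.
Proof.
move=> [D0 _ _ _ [M HM]]; exists (Num.max M 0); split; first by rewrite le_max lexx orbT.
move=> y; have := HM 0%N (leq0n _) y [::] erefl.
rewrite D0 /prodnorm big_nil mulr1 => h; apply: le_trans h _.
by rewrite le_max lexx.
Qed.

Let gL p p' : `|g p - g p'| <= Lg * `|p - p'|.
Proof. exact: Ckb_lip Lg0 Cg Dgb p p'. Qed.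
Let kcL x y : `|kc x - kc y| <= Lc * `|x - y|.
Proof. exact: Ckb_lip Lc0 Ckc Dkcb x y. Qed.

Definition gc p := (g p).1.1.
Definition gu p := (g p).1.2.
Definition gs p := (g p).2.
Let gcL p p' : `|gc p - gc p'| <= Lg * `|p - p'|.
Proof.
apply: le_trans _ (gL p p'); apply: le_trans _ (norm_fst (g p - g p')).
exact: (norm_fst ((g p - g p').1)).
Qed.
Let guL p p' : `|gu p - gu p'| <= Lg * `|p - p'|.
Proof.
apply: le_trans _ (gL p p'); apply: le_trans _ (norm_fst (g p - g p')).
exact: (norm_snd ((g p - g p').1)).
Qed.
Let gsL p p' : `|gs p - gs p'| <= Lg * `|p - p'|.
Proof. apply: le_trans _ (gL p p'); exact: (norm_snd (g p - g p')). Qed.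

Let Mg := projT1 (cid (Ckb_bnd Cg)).
Let Mg0 : 0 <= Mg. Proof. by case: (projT2 (cid (Ckb_bnd Cg))). Qed.
Let gb p : `|g p| <= Mg. Proof. by case: (projT2 (cid (Ckb_bnd Cg))). Qed.
Let Mk := projT1 (cid (Ckb_bnd Ckc)).
Let Mk0 : 0 <= Mk. Proof. by case: (projT2 (cid (Ckb_bnd Ckc))). Qed.
Let kb x : `|kc x| <= Mk. Proof. by case: (projT2 (cid (Ckb_bnd Ckc))). Qed.
Let gcb p : `|gc p| <= Mg.
Proof. apply: le_trans _ (gb p); apply: le_trans _ (norm_fst _); exact: norm_fst. Qed.
Let gub p : `|gu p| <= Mg.
Proof. apply: le_trans _ (gb p); apply: le_trans _ (norm_fst _); exact: norm_snd. Qed.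
Let gsb p : `|gs p| <= Mg.
Proof. apply: le_trans _ (gb p); exact: norm_snd. Qed.

Let idK z z' : (1 - Lc) * `|z - z'| <= `|(z + kc z) - (z' + kc z')|.
Proof.
have h := zid1 z z' (kc z) (kc z').
have := ler_normB (z + kc z - (z' + kc z')) (kc z - kc z').
rewrite -h => h1; have := kcL z z'; lra.
Qed.

Let exJ w : exists z, z + kc z = w.
Proof.
have [||z hz] := @banach R Xc (fun z => w - kc z) Lc.
- by rewrite Lc0 Lc1.
- by move=> x y; rewrite zid4 distrC; exact: kcL.
- by exists z; rewrite -{1}hz subrK.
Qed.

Definition J w := xget 0 [set z | z + kc z = w].
Let JE w : J w + kc (J w) = w.
Proof. exact: (xgetPex 0 (exJ w)). Qed.
Let J_uniq z w : z + kc z = w -> z = J w.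
Proof.
move=> h; have := idK z (J w); rewrite h JE subrr normr0 => h1.
apply/eqP; rewrite -subr_eq0 -normr_le0.
have h2 : 0 < 1 - Lc by rewrite subr_gt0.
by rewrite -(pmulr_rle0 _ h2).
Qed.

Definition Pf (f : Xc -> Xu * Xs) x : Xc * Xu * Xs := (x + kc x, (f x).1, (f x).2).
Definition Kset (f : Xc -> Xu * Xs) :=
  [/\ forall x y, `|(f x).1 - (f y).1| <= Lu * `|x - y|,
      forall x y, `|(f x).2 - (f y).2| <= Ls * `|x - y| &
      exists M, forall x, `|f x| <= M].

Let PfL f x y : Kset f -> `|Pf f x - Pf f y| <= (1 + Lc) * `|x - y|.
Proof.
case=> h1 h2 _.
have xy0 := normr_ge0 (x - y).
apply: norm_pair; first apply: norm_pair => /=.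
- rewrite zid3.
  apply: le_trans (ler_normD _ _) _; have := kcL x y; lra.
- apply: le_trans (h1 x y) _; apply: ler_wpM2r => //; exact: LuL.
- apply: le_trans (h2 x y) _; apply: ler_wpM2r => //; exact: LsL.
Qed.

Let PfD f f' B x : (forall y, `|f y - f' y| <= B) -> 0 <= B ->
  `|Pf f x - Pf f' x| <= B.
Proof.
move=> hB B0; apply: norm_pair; first apply: norm_pair => /=.
- by rewrite subrr normr0.
- exact: le_trans (norm_fst (f x - f' x)) (hB x).
- exact: le_trans (norm_snd (f x - f' x)) (hB x).
Qed.

Definition Phi f x := J (Ac (x + kc x) + gc (Pf f x)).
Let PhiE f x : Phi f x + kc (Phi f x) = Ac (x + kc x) + gc (Pf f x).
Proof. exact: JE. Qed.
Definition rf f x := Phi f x - Ac x.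
Let rfE f x : rf f x = Ac (kc x) + gc (Pf f x) - kc (Phi f x).
Proof.
rewrite /rf; have := PhiE f x; rewrite linearD => h.
have h' : Phi f x = Ac x + Ac (kc x) + gc (Pf f x) - kc (Phi f x) by rewrite -h addrK.
by rewrite {1}h' -(addrA (Ac x)) zid5.
Qed.
Let PhiAr f x : Phi f x = Ac x + rf f x.
Proof. by rewrite /rf addrC subrK. Qed.

Let rL f x y : Kset f -> `|rf f x - rf f y| <= Lr * `|x - y|.
Proof.
move=> Kf.
set d := `|x - y|; set Rr := `|rf f x - rf f y|.
set Pd := `|Phi f x - Phi f y|.
have F1 : `|Ac (kc x) - Ac (kc y)| <= a * (Lc * d).
  rewrite -linearB; apply: le_trans (Acb _) _; apply: ler_wpM2l => //; exact: kcL.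
have F2 : `|gc (Pf f x) - gc (Pf f y)| <= Lg * ((1 + Lc) * d).
  apply: le_trans (gcL _ _) _; apply: ler_wpM2l => //; exact: PfL.
have F4 : Pd <= a * d + Rr.
  rewrite /Pd !PhiAr.
  rewrite zid3 -linearB.
  apply: le_trans (ler_normD _ _) _; apply: lerD => //; exact: Acb.
have F3 : `|kc (Phi f x) - kc (Phi f y)| <= Lc * (a * d + Rr).
  apply: le_trans (kcL _ _) _; apply: ler_wpM2l => //.
have F5 : Rr <= `|Ac (kc x) - Ac (kc y)| + `|gc (Pf f x) - gc (Pf f y)|
               + `|kc (Phi f x) - kc (Phi f y)|.
  rewrite /Rr !rfE.
  set A1 := Ac (kc x); set A2 := Ac (kc y); set G1 := gc _; set G2 := gc _.
  set K1 := kc _; set K2 := kc _.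
  rewrite zid2.
  apply: le_trans (ler_normB _ _) _; rewrite lerD2r.
  exact: ler_normD.
have Lc1' : 0 < 1 - Lc by rewrite subr_gt0.
rewrite /Lr /cL_r mulrAC ler_pdivlMr //.
have := Lc1; lra.
Qed.

Let Phi_surj f z : Kset f -> exists x, Phi f x = z.
Proof.
move=> Kf.
have [||x hx] := @banach R Xc (fun x => Aci (z - rf f x)) (ai * Lr).
- by rewrite mulr_ge0 //= mulrC Lrai.
- move=> x y; rewrite -linearB; apply: le_trans (Acib _) _.
  rewrite -mulrA; apply: ler_wpM2l => //.
  by rewrite zid4 distrC; exact: rL.
- exists x; rewrite PhiAr -{1}hx AciK.
  by rewrite subrK.
Qed.

Let Phi_inj f x y : Kset f -> `|x - y| <= Lm1 * `|Phi f x - Phi f y|.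
Proof.
move=> Kf.
have e1 : Phi f x - Phi f y - (rf f x - rf f y) = Ac x - Ac y.
  by rewrite (PhiAr f x) (PhiAr f y) (zid3 (Ac x) (Ac y)) addrK.
have h : x - y = Aci ((Phi f x - Phi f y) - (rf f x - rf f y)).
  by rewrite e1 -linearB AcK.
have h1 : `|x - y| <= ai * (`|Phi f x - Phi f y| + Lr * `|x - y|).
  rewrite {1}h; apply: le_trans (Acib _) _; apply: ler_wpM2l => //.
  apply: le_trans (ler_normB _ _) _; rewrite lerD2l; exact: rL.
rewrite Lm1E mulrAC ler_pdivlMr //.
have := E0; nra.
Qed.

Definition Phinv f z := xget 0 [set x | Phi f x = z].
Let PhinvE f z : Kset f -> Phi f (Phinv f z) = z.
Proof. by move=> Kf; exact: (xgetPex 0 (Phi_surj f z Kf)). Qed.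
Let PhinvK f x : Kset f -> Phinv f (Phi f x) = x.
Proof.
move=> Kf; apply/eqP; rewrite -subr_eq0 -normr_le0.
apply: le_trans (Phi_inj _ _ _ Kf) _.
by rewrite PhinvE // subrr normr0 mulr0.
Qed.
Let PhinvL f z z' : Kset f -> `|Phinv f z - Phinv f z'| <= Lm1 * `|z - z'|.
Proof. by move=> Kf; apply: le_trans (Phi_inj _ _ _ Kf) _; rewrite !PhinvE. Qed.

Let PhiD f f' B x : (forall y, `|f y - f' y| <= B) -> 0 <= B ->
  `|Phi f x - Phi f' x| <= B.
Proof.
move=> hB B0.
have := idK (Phi f x) (Phi f' x); rewrite !PhiE zid3 subrr add0r.
move=> h; have h2 := le_trans h (gcL _ _).
have h3 : Lg * `|Pf f x - Pf f' x| <= Lg * B by apply: ler_wpM2l => //; exact: PfD.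
have h4 : Lg * B <= (1 - Lc) * B by apply: ler_wpM2r => //; have := th1; lra.
have Lc1' : 0 < 1 - Lc by rewrite subr_gt0.
by rewrite -(ler_pM2l Lc1'); apply: le_trans h4; apply: le_trans h3.
Qed.

Let est_u f f' B x : Kset f -> 0 <= B -> (forall y, `|f y - f' y| <= B) ->
  `|Aui ((f (Phi f x)).1 - gu (Pf f x)) - Aui ((f' (Phi f' x)).1 - gu (Pf f' x))|
    <= th2 * B.
Proof.
move=> [Kf1 Kf2 _] B0 hB.
rewrite -linearB; apply: le_trans (Auib _) _; rewrite /th2 -mulrA.
apply: ler_wpM2l => //; rewrite zid6.
apply: le_trans (ler_normB _ _) _.
have h1 : `|(f (Phi f x)).1 - (f (Phi f' x)).1| <= Lu * B.
  apply: le_trans (Kf1 _ _) _; apply: ler_wpM2l => //; exact: PhiD.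
have h2 : `|(f (Phi f' x)).1 - (f' (Phi f' x)).1| <= B.
  exact: le_trans (norm_fst (f _ - f' _)) (hB _).
have h3 : `|gu (Pf f x) - gu (Pf f' x)| <= Lg * B.
  apply: le_trans (guL _ _) _; apply: ler_wpM2l => //; exact: PfD.
have h4 := ler_distD ((f (Phi f' x)).1) ((f (Phi f x)).1) ((f' (Phi f' x)).1).
lra.
Qed.

Let est_s f f' B x x' : Kset f -> 0 <= B -> (forall y, `|f y - f' y| <= B) ->
  Phi f x = Phi f' x' ->
  `|As (f x).2 + gs (Pf f x) - (As (f' x').2 + gs (Pf f' x'))| <= th3 * B.
Proof.
move=> Kf B0 hB hx; have [Kf1 Kf2 _] := Kf.
have dx : `|x - x'| <= Lm1 * B.
  apply: le_trans (Phi_inj _ _ _ Kf) _; apply: ler_wpM2l => //.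
  by rewrite hx distrC; exact: PhiD.
have dx0 := normr_ge0 (x - x').
rewrite zid3; apply: le_trans (ler_normD _ _) _.
have h1 : `|(f x).2 - (f' x').2| <= Ls * (Lm1 * B) + B.
  apply: le_trans (ler_distD ((f x').2) _ _) _; apply: lerD.
    by apply: le_trans (Kf2 _ _) _; apply: ler_wpM2l.
  exact: le_trans (norm_snd (f _ - f' _)) (hB _).
have h2 : `|Pf f x - Pf f' x'| <= (1 + Lc) * (Lm1 * B) + B.
  apply: le_trans (ler_distD (Pf f x') _ _) _; apply: lerD; last exact: PfD.
  apply: le_trans (PfL _ _ _ Kf) _; apply: ler_wpM2l => //; exact: addr_ge0 ler01 Lc0.
have h3 : `|As (f x).2 - As (f' x').2| <= s * (Ls * (Lm1 * B) + B).
  rewrite -linearB; apply: le_trans (Asb _) _; exact: ler_wpM2l.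
have h4 : `|gs (Pf f x) - gs (Pf f' x')| <= Lg * ((1 + Lc) * (Lm1 * B) + B).
  apply: le_trans (gsL _ _) _; exact: ler_wpM2l.
rewrite /th3; lra.
Qed.

Definition T (f : Xc -> Xu * Xs) : Xc -> Xu * Xs := fun x =>
  (Aui ((f (Phi f x)).1 - gu (Pf f x)),
   As (f (Phinv f x)).2 + gs (Pf f (Phinv f x))).

Let T_contr f f' B : Kset f -> Kset f' -> 0 <= B ->
  (forall y, `|f y - f' y| <= B) -> forall x, `|T f x - T f' x| <= q * B.
Proof.
move=> Kf Kf' B0 hB x; apply: norm_pair => /=.
- apply: le_trans (@est_u f f' B x Kf B0 hB) _; apply: ler_wpM2r => //.
  by rewrite le_max lexx.
- apply: le_trans (@est_s f f' B (Phinv f x) (Phinv f' x) Kf B0 hB _) _.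
    by rewrite !PhinvE.
  by apply: ler_wpM2r => //; rewrite le_max lexx orbT.
Qed.

Let PhiL f x y : Kset f -> `|Phi f x - Phi f y| <= (a + Lr) * `|x - y|.
Proof.
move=> Kf; rewrite !PhiAr zid3 mulrDl; apply: le_trans (ler_normD _ _) _.
apply: lerD; last exact: rL.
by rewrite -linearB; exact: Acb.
Qed.

Let T_K f : Kset f -> Kset (T f).
Proof.
move=> Kf; have [Kf1 Kf2 [M HM]] := Kf.
have M0 : 0 <= M := le_trans (normr_ge0 _) (HM 0).
split => /=.
- move=> x y; rewrite -linearB; apply: le_trans (Auib _) _.
  rewrite -[X in _ <= X * _]I1 -mulrA; apply: ler_wpM2l => //.
  rewrite zid6; apply: le_trans (ler_normB _ _) _.
  have e1 := le_trans (Kf1 _ _) (ler_wpM2l Lu0 (PhiL f x y Kf)).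
  have e2 := le_trans (guL _ _) (ler_wpM2l Lg0 (PfL f x y Kf)).
  lra.
- move=> z z'; rewrite zid3; apply: le_trans (ler_normD _ _) _.
  rewrite -[X in _ <= X * _]I2.
  have hz := PhinvL f z z' Kf.
  have d0 := normr_ge0 (Phinv f z - Phinv f z').
  have h1 : `|As (f (Phinv f z)).2 - As (f (Phinv f z')).2|
      <= s * (Ls * `|Phinv f z - Phinv f z'|).
    rewrite -linearB; apply: le_trans (Asb _) _; apply: ler_wpM2l => //.
  have h2 : `|gs (Pf f (Phinv f z)) - gs (Pf f (Phinv f z'))|
      <= Lg * ((1 + Lc) * `|Phinv f z - Phinv f z'|).
    apply: le_trans (gsL _ _) _; apply: ler_wpM2l => //; exact: PfL.
  have h3 : (s * Ls + Lg * (1 + Lc)) * `|Phinv f z - Phinv f z'|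
      <= (s * Ls + Lg * (1 + Lc)) * (Lm1 * `|z - z'|).
    apply: ler_wpM2l => //; apply: addr_ge0; apply: mulr_ge0 => //; exact: addr_ge0 ler01 Lc0.
  lra.
- exists (ui * (M + Mg) + (s * M + Mg)) => x.
  have hu : 0 <= ui * (M + Mg) by apply: mulr_ge0 => //; have := Mg0; lra.
  have hs : 0 <= s * M + Mg by have := Mg0; have := mulr_ge0 s0 M0; lra.
  apply: norm_pair => /=.
  + apply: le_trans (Auib _) _.
    have : `|(f (Phi f x)).1 - gu (Pf f x)| <= M + Mg.
      apply: le_trans (ler_normB _ _) _; apply: lerD => //.
      exact: le_trans (norm_fst _) (HM _).
    move=> h; have := ler_wpM2l ui0 h; have := Mg0; lra.
  + apply: le_trans (ler_normD _ _) _.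
    have h1 : `|As (f (Phinv f x)).2| <= s * M.
      apply: le_trans (Asb _) _; apply: ler_wpM2l => //.
      exact: le_trans (norm_snd _) (HM _).
    have := Mg0; have := gsb (Pf f (Phinv f x)); lra.
Qed.

Let K_closed (fs : nat -> Xc -> Xu * Xs) f C : (forall k, Kset (fs k)) ->
  (forall k a, `|f a - fs k a| <= C * q ^+ k) -> Kset f.
Proof.
move=> Kfs hf; split.
- move=> x y; apply: (@geo_small R _ _ (2 * C) q q01) => k.
  have [h1 _ _] := Kfs k.
  have e1 := le_trans (norm_fst _) (hf k x).
  have e2 := le_trans (norm_fst _) (hf k y).
  have t1 := ler_distD ((fs k x).1) ((f x).1) ((f y).1).
  have t2 := ler_distD ((fs k y).1) ((fs k x).1) ((f y).1).
  simpl in e1, e2.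
  have e3 : `|(fs k y).1 - (f y).1| <= C * q ^+ k by rewrite distrC.
  have := h1 x y; lra.
- move=> x y; apply: (@geo_small R _ _ (2 * C) q q01) => k.
  have [_ h1 _] := Kfs k.
  have e1 := le_trans (norm_snd _) (hf k x).
  have e2 := le_trans (norm_snd _) (hf k y).
  have t1 := ler_distD ((fs k x).2) ((f x).2) ((f y).2).
  have t2 := ler_distD ((fs k y).2) ((fs k x).2) ((f y).2).
  simpl in e1, e2.
  have e3 : `|(fs k y).2 - (f y).2| <= C * q ^+ k by rewrite distrC.
  have := h1 x y; lra.
- have [_ _ [M HM]] := Kfs 0%N.
  exists (M + C) => x; have := hf 0%N x; rewrite expr0 mulr1 => h.
  have := ler_distD (fs 0%N x) (f x) 0; rewrite !subr0.
  have h' : `|fs 0%N x - f x| <= C by rewrite distrC.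
  have := HM x; lra.
Qed.

Let fixpt : exists f, Kset f /\ T f = f.
Proof.
apply: (@abstract_fix R Xc (Xu * Xs)%type
  (geoc_prod (geoc_complete Xu) (geoc_complete Xs)) Kset T q (fun _ => 0) (ui * Mg + Mg) q01).
- by have := Mg0; have := mulr_ge0 ui0 Mg0; lra.
- split.
  + by move=> x y /=; rewrite subrr normr0; exact: mulr_ge0.
  + by move=> x y /=; rewrite subrr normr0; exact: mulr_ge0.
  + by exists 0 => x; rewrite normr0.
- exact: T_K.
- exact: T_contr.
- move=> x; rewrite subr0; apply: norm_pair => /=.
  + apply: le_trans (Auib _) _; rewrite sub0r normrN.
    have := ler_wpM2l ui0 (gub (Pf (fun=> 0) x)); have := Mg0; lra.
  + rewrite linear0 add0r; have := gsb (Pf (fun=> 0) (Phinv (fun=> 0) x)).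
    have := mulr_ge0 ui0 Mg0; lra.
- exact: K_closed.
Qed.

Lemma main :
  let F : Xc * Xu * Xs -> Xc * Xu * Xs :=
    fun p => (Ac p.1.1, Au p.1.2, As p.2) + g p in
  let sol (r : Xc -> Xc) (ku : Xc -> Xu) (ks : Xc -> Xs) : Prop :=
    [/\ bounded_continuous ku, bounded_continuous ks, bounded_continuous r,
        homeomorphism (fun x => Ac x + r x) &
        forall x : Xc, let y := Ac x + r x in
          F (x + kc x, ku x, ks x) = (y + kc y, ku y, ks y)] in
  exists r ku ks, sol r ku ks /\
    forall r' ku' ks', sol r' ku' ks' -> [/\ r' = r, ku' = ku & ks' = ks].
Proof.
move=> F sol.
have [f [Kf Tf]] := fixpt.
have [Kf1 Kf2 [M HM]] := Kf.
have M0 : 0 <= M := le_trans (normr_ge0 _) (HM 0).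
have fu x : (f x).1 = Aui ((f (Phi f x)).1 - gu (Pf f x)) by rewrite -{1}Tf.
have fs x : (f x).2 = As (f (Phinv f x)).2 + gs (Pf f (Phinv f x)) by rewrite -{1}Tf.
exists (rf f), (fun x => (f x).1), (fun x => (f x).2); split.
  rewrite /sol; split.
  - split; first exact: (@lip_cont R _ _ (fun x => (f x).1) Lu Lu0 Kf1).
    by exists M => x; exact: le_trans (norm_fst _) (HM x).
  - split; first exact: (@lip_cont R _ _ (fun x => (f x).2) Ls Ls0 Kf2).
    by exists M => x; exact: le_trans (norm_snd _) (HM x).
  - split; first exact: (@lip_cont R _ _ (rf f) Lr Lr0 (fun x y => rL f x y Kf)).
    exists (a * Mk + Mg + Mk) => x; rewrite rfE.
    apply: le_trans (ler_normB _ _) _; apply: lerD => //.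
    apply: le_trans (ler_normD _ _) _; apply: lerD => //.
    by apply: le_trans (Acb _) _; apply: ler_wpM2l.
  - have -> : (fun x => Ac x + rf f x) = Phi f.
      by apply: boolp.funext => x; rewrite PhiAr.
    split; first exact: (@lip_cont R _ _ (Phi f) _ (addr_ge0 a0 Lr0) (fun x y => PhiL f x y Kf)).
    exists (Phinv f); first by split => z; [exact: PhinvK | exact: PhinvE].
    exact: (@lip_cont R _ _ (Phinv f) _ Lm10 (fun z z' => PhinvL f z z' Kf)).
  - move=> x /=; rewrite -PhiAr /F /=.
    have hu : (f (Phi f x)).1 = Au (f x).1 + gu (Pf f x).
      by rewrite (fu x) AuiK subrK.
    have hs : (f (Phi f x)).2 = As (f x).2 + gs (Pf f x).
      by rewrite fs PhinvK.
    rewrite PhiE hu hs /gc /gu /gs /Pf /=.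
    by case: (g _) => [[g1 g2] g3].
rewrite /sol => r' ku' ks' [[cu [Mu HMu]] [cs [Ms HMs]] _ [_ [h' [_ hh'] _]] heq].
pose f' x := (ku' x, ks' x).
have c' x : Ac x + r' x = Phi f' x.
  have := congr1 (fun p => p.1.1) (heq x); rewrite /F /= => h.
  by apply: J_uniq; rewrite -h.
have u' x : ku' x = Aui (ku' (Phi f' x) - gu (Pf f' x)).
  have := congr1 (fun p => p.1.2) (heq x); rewrite /F /= c' => h.
  by rewrite -h addrK AuK.
have s' x : ks' (Phi f' x) = As (ks' x) + gs (Pf f' x).
  have := congr1 (fun p => p.2) (heq x); rewrite /F /= c' => h.
  by rewrite -h.
have surj z : Phi f' (h' z) = z by rewrite -c' hh'.
have Mu0 : 0 <= Mu := le_trans (normr_ge0 _) (HMu 0).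
have Ms0 : 0 <= Ms := le_trans (normr_ge0 _) (HMs 0).
have bnd k x : `|f x - f' x| <= (M + (Mu + Ms)) * q ^+ k.
  elim: k x => [|k IH] x.
    rewrite expr0 mulr1; apply: le_trans (ler_normB _ _) _; apply: lerD => //.
    apply: norm_pair => /=.
      by apply: le_trans (HMu x) _; rewrite lerDl.
    by apply: le_trans (HMs x) _; rewrite lerDr.
  have B0 : 0 <= (M + (Mu + Ms)) * q ^+ k.
    by apply: mulr_ge0; [rewrite !addr_ge0 | exact: exprn_ge0].
  rewrite exprS mulrCA.
  apply: norm_pair => /=.
    rewrite (fu x) (u' x).
    apply: le_trans (@est_u f f' _ x Kf B0 IH) _.
    by apply: ler_wpM2r => //; rewrite le_max lexx.
  have e1 : ks' x = As (ks' (h' x)) + gs (Pf f' (h' x)) by rewrite -s' surj.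
  rewrite (fs x) e1.
  apply: le_trans (@est_s f f' _ (Phinv f x) (h' x) Kf B0 IH _) _.
    by rewrite PhinvE // surj.
  by apply: ler_wpM2r => //; rewrite le_max lexx orbT.
have ff' : f' = f.
  apply: boolp.funext => x; apply/eqP; rewrite eq_sym -subr_eq0 -normr_le0.
  apply: (@geo_small R _ 0 (M + (Mu + Ms)) q q01) => k.
  by rewrite add0r; exact: bnd.
split.
- apply: boolp.funext => x.
  have := c' x; rewrite ff' => h.
  by rewrite /rf -h addrC addKr.
- apply: boolp.funext => x; by rewrite -ff'.
- apply: boolp.funext => x; by rewrite -ff'.
Qed.
End Main.

(* X = X_c (+) X_u (+) X_s with the max norm is modelled as the product
   Xc * Xu * Xs (whose library norm is the max norm); A = diag(A_c,A_u,A_s). *)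
Theorem lemma6p2 (R : realType) (n : nat)
  (Xc Xu Xs : completeNormedModType R)
  (Ac Aci : {linear Xc -> Xc}) (Au Aui : {linear Xu -> Xu})
  (As : {linear Xs -> Xs})
  (g : Xc * Xu * Xs -> Xc * Xu * Xs)
  (Dg : nat -> Xc * Xu * Xs -> seq (Xc * Xu * Xs) -> Xc * Xu * Xs)
  (kc : Xc -> Xc) (Dkc : nat -> Xc -> seq Xc -> Xc)
  (Lg Lc : R) :
  (2 <= n)%N ->
  (* bounded linear parts, A_c and A_u invertible with bounded inverses *)
  continuous (Ac : Xc -> Xc) -> continuous (Au : Xu -> Xu) ->
  continuous (As : Xs -> Xs) ->
  continuous (Aci : Xc -> Xc) -> continuous (Aui : Xu -> Xu) ->
  cancel Ac Aci -> cancel Aci Ac -> cancel Au Aui -> cancel Aui Au ->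
  (forall m, (1 <= m <= n)%N ->
     opnorm (Aci : Xc -> Xc) ^+ m * opnorm (As : Xs -> Xs) < 1 /\
     opnorm (Aui : Xu -> Xu) * opnorm (Ac : Xc -> Xc) ^+ m < 1) ->
  0 <= Lg -> 0 <= Lc ->
  (* g in C^n_b(X,X), g(0)=0, Dg(0)=0, ||Dg||_0 <= Lg *)
  Ckb_family n g Dg -> g 0 = 0 ->
  (forall h, Dg 1%N 0 [:: h] = 0) ->
  (forall y h, `|Dg 1%N y [:: h]| <= Lg * `|h|) ->
  (* k_c in C^n_b(X_c,X_c), k_c(0)=0, Dk_c(0)=0, ||Dk_c||_0 <= Lc *)
  Ckb_family n kc Dkc -> kc 0 = 0 ->
  (forall h, Dkc 1%N 0 [:: h] = 0) ->
  (forall y h, `|Dkc 1%N y [:: h]| <= Lc * `|h|) ->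
  (* (S_n) *)
  cond_S n (opnorm (Ac : Xc -> Xc)) (opnorm (Aci : Xc -> Xc))
    (opnorm (Aui : Xu -> Xu)) (opnorm (As : Xs -> Xs)) Lg Lc ->
  let F : Xc * Xu * Xs -> Xc * Xu * Xs :=
    fun p => (Ac p.1.1, Au p.1.2, As p.2) + g p in
  let sol (r : Xc -> Xc) (ku : Xc -> Xu) (ks : Xc -> Xs) : Prop :=
    [/\ bounded_continuous ku, bounded_continuous ks, bounded_continuous r,
        homeomorphism (fun x => Ac x + r x) &
        forall x : Xc, let y := Ac x + r x in
          F (x + kc x, ku x, ks x) = (y + kc y, ku y, ks y)] in
  exists r ku ks, sol r ku ks /\
    forall r' ku' ks', sol r' ku' ks' -> [/\ r' = r, ku' = ku & ks' = ks].
Proof.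
move=> n2 cAc cAu cAs cAci cAui AcK AciK AuK AuiK _ Lg0 Lc0 Cg _ _ Dgb Ckc _ _ Dkcb HS.
exact (@main _ _ _ _ _ _ _ _ _ _ _ _ _ _ _ _ n2 cAc cAs cAci cAui AcK AciK AuK AuiK Lg0 Lc0 Cg Dgb Ckc Dkcb HS).
Qed.
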